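(* Let $k\ge 2$ be an integer. Every finite simple graph $G$ is an induced subgraph of some finite simple graph $H$ that admits a closed neighborhood balanced $k$-coloring.
   Context: For a vertex $v$ of a graph $G$, $N[v]=\{v\}\cup\{u : uv\in E(G)\}$ is its closed neighborhood. For an integer $k\ge 2$, a closed neighborhood balanced $k$-coloring of $G$ is a map $c: V(G)\to\{1,2,\dots,k\}$ such that for every vertex $v$ the numbers $|\{u\in N[v] : c(u)=i\}|$, $i=1,\dots,k$, are all equal. *)

(* Defs.v *)
From mathcomp Require Import all_boot.
Set Implicit Arguments. Unset Strict Implicit. Unset Printing Implicit Defensive.

Definition simple_graph (T : finType) (e : rel T) : Prop :=
  symmetric e /\ irreflexive e.

Definition closed_nbhd (T : finType) (e : rel T) (v : T) : {set T} :=
  [set u | (u == v) || e v u].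

Definition cnb_coloring (T : finType) (e : rel T) (k : nat) (c : T -> 'I_k) : Prop :=
  forall (v : T) (i j : 'I_k),
    #|[set u in closed_nbhd e v | c u == i]| = #|[set u in closed_nbhd e v | c u == j]|.

Definition induced_subgraph (T : finType) (e : rel T) (T' : finType) (e' : rel T') : Prop :=
  exists f : T -> T', injective f /\ forall x y : T, e' (f x) (f y) = e x y.

(* Main.v *)
Require Import Defs.
From mathcomp Require Import all_boot.

Theorem theorem2p6 (k : nat) (hk : 2 <= k) (T : finType) (e : rel T) :
  simple_graph e ->
  exists (T' : finType) (e' : rel T'),
    simple_graph e' /\ induced_subgraph e e' /\
    exists c : T' -> 'I_k, cnb_coloring e' c.
Proof.
move=> [sym irr].
pose e' : rel (T * 'I_k)%type :=
  fun a b => ((a.1 == b.1) && (a.2 != b.2)) || e a.1 b.1.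
exists (T * 'I_k)%type, e'.
have k0 : 0 < k by apply: leq_trans hk.
split; [split|split].
- move=> [x i] [y j]; rewrite /e' /= sym; congr orb; rewrite eq_sym; congr andb.
  by rewrite eq_sym.
- by move=> [x i]; rewrite /e' /= !eqxx irr.
- rewrite /induced_subgraph; exists (fun x => (x, Ordinal k0)); split.
  + by move=> x y [].
  + by move=> x y; rewrite /e' /= ?eqxx ?andbF.
- exists snd; rewrite /cnb_coloring => -[x i] a b.
  suff H : forall a : 'I_k, [set u in closed_nbhd e' (x, i) | u.2 == a] =
      (fun y => (y, a)) @: closed_nbhd e x.
    rewrite !H !card_imset //; by move=> y z [].
  move=> c; apply/setP => [[y j]]; rewrite !inE /=.
  apply/idP/imsetP.
  + move=> /andP [H /eqP ->]; exists y => //; rewrite inE.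
    move: H; rewrite /e' /= xpair_eqE.
    case: (y =P x) => [-> | ny] /=; first by rewrite eqxx.
    by rewrite eq_sym (introF eqP ny) /=.
  + move=> [z]; rewrite inE => H [-> ->]; rewrite eqxx andbT /e' /=.
    case/orP: H => [/eqP -> | ->]; last by rewrite !orbT.
    case: (c =P i) => [-> | /eqP nc]; rewrite ?eqxx //.
    by rewrite eq_sym in nc; rewrite nc orbT.
Qed.
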